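(* Let $S$ be a semiring and let $\mathcal{A}=(A,X,Y,\sigma^A,\mu^A)$ be a sequential weighted automaton over $S$. Then there exists a Moore-type weighted automaton $\mathcal{B}=(B,X,Y,\sigma^B,\delta^B,\omega^B)$ over $S$ such that $[\![\mathcal{A}]\!]=[\![\mathcal{B}]\!]_{1n}$. Moreover, $\mathcal{B}$ can be chosen with $|B|\le |A|\cdot|Y|$.
   Context: A semiring $(S,+,\cdot,0,1)$ is a set with $(S,+,0)$ a commutative monoid, $(S,\cdot,1)$ a monoid (not necessarily commutative), $\cdot$ distributing over $+$ on both sides, and $0\cdot s=s\cdot 0=0$. $(X\times Y)^*$ is identified with the set of pairs $(u,v)\in X^*\times Y^*$ with $|u|=|v|$; its empty element is $(\varepsilon,\varepsilon)$. All automata have finite nonempty state set and finite nonempty alphabets $X,Y$. A sequential weighted automaton over $S$ is $\mathcal{A}=(A,X,Y,\sigma,\mu)$ with $\sigma:A\to S$ and $\mu:A\times X\times Y\times A\to S$. Its behavior $[\![\mathcal{A}]\!]:(X\times Y)^*\to S$ is $[\![\mathcal{A}]\!](\varepsilon,\varepsilon)=\sum_{a\in A}\sigma(a)$ and, for $u=x_1\cdots x_n$, $v=y_1\cdots y_n$ ($n\ge1$), $[\![\mathcal{A}]\!](u,v)=\sum_{(a_0,\dots,a_n)\in A^{n+1}}\sigma(a_0)\cdot\mu(a_0,x_1,y_1,a_1)\cdots\mu(a_{n-1},x_n,y_n,a_n)$. A Moore-type weighted automaton over $S$ is $\mathcal{B}=(B,X,Y,\sigma,\delta,\omega)$ with $\sigma:B\to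 S$, $\delta:B\times X\times B\to S$, $\omega:B\times Y\to S$; write $\delta_x(b,c)=\delta(b,x,c)$, $\omega_y(b)=\omega(b,y)$. Its $1n$-behavior is $[\![\mathcal{B}]\!]_{1n}(\varepsilon,\varepsilon)=\sum_{b\in B}\sigma(b)$ and, for $u=x_1\cdots x_n$, $v=y_1\cdots y_n$ with $n\ge1$, $[\![\mathcal{B}]\!]_{1n}(u,v)=\sum_{(b_0,\dots,b_n)\in B^{n+1}}\sigma(b_0)\cdot\delta_{x_1}(b_0,b_1)\cdot\omega_{y_1}(b_1)\cdots\delta_{x_n}(b_{n-1},b_n)\cdot\omega_{y_n}(b_n)$. *)

(* Defs.v *)
From HB Require Import structures.
From mathcomp Require Import all_boot all_order all_algebra.
Set Implicit Arguments. Unset Strict Implicit. Unset Printing Implicit Defensive.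
Import GRing.Theory.
Local Open Scope ring_scope.

(* S : a (possibly noncommutative, possibly trivial) semiring = pzSemiRingType.
   (X x Y)^* is represented as seq (X * Y): a list of pairs (x_i, y_i), i.e. a pair
   of words (u, v) of equal length. *)

Record seq_aut (S : pzSemiRingType) (A X Y : finType) := SeqAut {
  sa_sigma : A -> S;
  sa_mu : A -> X -> Y -> A -> S }.

Record moore_aut (S : pzSemiRingType) (B X Y : finType) := MooreAut {
  mo_sigma : B -> S;
  mo_delta : B -> X -> B -> S;
  mo_omega : B -> Y -> S }.

Definition seq_behavior (S : pzSemiRingType) (A X Y : finType)
    (M : seq_aut S A X Y) (w : seq (X * Y)) : S :=
  \sum_(a : {ffun 'I_(size w).+1 -> A})
     (sa_sigma M (a ord0) *
      \prod_(i < size w)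
         sa_mu M (a (inord i)) (tnth (in_tuple w) i).1 (tnth (in_tuple w) i).2
               (a (inord i.+1))).

Definition moore_behavior_1n (S : pzSemiRingType) (B X Y : finType)
    (N : moore_aut S B X Y) (w : seq (X * Y)) : S :=
  \sum_(b : {ffun 'I_(size w).+1 -> B})
     (mo_sigma N (b ord0) *
      \prod_(i < size w)
         (mo_delta N (b (inord i)) (tnth (in_tuple w) i).1 (b (inord i.+1)) *
          mo_omega N (b (inord i.+1)) (tnth (in_tuple w) i).2)).

(* Main.v *)
Require Import Defs.
From HB Require Import structures.
From mathcomp Require Import all_boot all_order all_algebra.
Import GRing.Theory.
Local Open Scope ring_scope.

Lemma tnth_snd {X Y : Type} (y0 : Y) (w : seq (X * Y)) (i : 'I_(size w)) :
  (tnth (in_tuple w) i).2 = nth y0 (map snd w) i.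
Proof.
rewrite (nth_map (tnth (in_tuple w) i)) ?ltn_ord //.
by rewrite [in LHS](tnth_nth (tnth (in_tuple w) i)).
Qed.

Lemma prod_zero (S : pzSemiRingType) n (F : 'I_n -> S) j :
  F j = 0 -> \prod_(i < n) F i = 0.
Proof.
elim: n F j => [|n IH] F j; first by case: j.
rewrite big_ord_recl => Fj.
case: (unliftP ord0 j) => [j'|] Hj; last by rewrite -Hj Fj mul0r.
by rewrite (IH _ j') ?mulr0 // -Hj.
Qed.

Theorem theorem3 (S : pzSemiRingType) (A X Y : finType)
    (hA : (0 < #|A|)%N) (hX : (0 < #|X|)%N) (hY : (0 < #|Y|)%N)
    (M : seq_aut S A X Y) :
  exists (B : finType) (N : moore_aut S B X Y),
    (0 < #|B|)%N /\ (#|B| <= #|A| * #|Y|)%N /\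
    forall w : seq (X * Y), seq_behavior M w = moore_behavior_1n N w.
Proof.
have /card_gt0P [y0 _] := hY.
pose N := MooreAut (fun b : A * Y => if b.2 == y0 then sa_sigma M b.1 else 0)
  (fun (b : A*Y) (x : X) (c : A*Y) => sa_mu M b.1 x c.2 c.1)
  (fun (b : A*Y) (y : Y) => if b.2 == y then (1:S) else 0).
exists (A * Y)%type, N.
split; first by rewrite card_prod muln_gt0 hA hY.
split; first by rewrite card_prod.
move=> w; rewrite /seq_behavior /moore_behavior_1n.
pose h := fun p : {ffun 'I_(size w).+1 -> A} * {ffun 'I_(size w).+1 -> Y} =>
  [ffun i => (p.1 i, p.2 i)].
rewrite (reindex h) /=; last first.
  apply: onW_bij.
  exists (fun b : {ffun 'I_(size w).+1 -> A * Y} =>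
            ([ffun i => (b i).1], [ffun i => (b i).2])) => [[a z]|b] /=.
    by congr pair; apply/ffunP => i; rewrite !ffunE.
  by apply/ffunP => i; rewrite !ffunE; case: (b i).
match goal with |- _ = \sum_j @?G j =>
  rewrite -(pair_bigA _ (fun a z => G (a, z))) /= end.
apply: eq_bigr => a _.
pose zs : {ffun 'I_(size w).+1 -> Y} := [ffun i : 'I_(size w).+1 =>
   if (i : nat) is k.+1 then nth y0 (map snd w) k else y0].
rewrite /h (bigD1 zs) //= [X in _ + X]big1 ?addr0.
  rewrite !ffunE /= eqxx; congr (_ * _).
  apply: eq_bigr => i _; rewrite !ffunE /= inordK; last by rewrite ltnS.
  by rewrite -(tnth_snd y0) eqxx mulr1.
move=> z Hz.
case: (pickP (fun i => z i != zs i)) => [i Hi | H]; last first.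
  by case/eqP: Hz; apply/ffunP => i; move/negbFE/eqP: (H i).
rewrite ffunE /=.
case: i Hi => [[|k] Hk] Hi.
  have -> : (ord0 : 'I_(size w).+1) = Ordinal Hk by apply: val_inj.
  by move: Hi; rewrite ffunE /= => Hi; rewrite (negbTE Hi) mul0r.
have Hk' : (k < size w)%N by rewrite -ltnS.
rewrite (@prod_zero _ _ _ (Ordinal Hk')) ?mulr0 //.
rewrite !ffunE.
have -> : (inord k.+1 : 'I_(size w).+1) = Ordinal Hk by apply: val_inj; rewrite /= inordK.
rewrite (tnth_snd y0).
move: Hi; rewrite ffunE /= => Hi.
by rewrite (negbTE Hi) mulr0.
Qed.
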